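(* Fix job indices $s,k'$ and an integer time $\theta\ge r_s$ such that every job $j\le k'$ with $r_s\le r_j<\theta$ satisfies $C^{\mathrm{edf}}_{s,j}\le\theta$. Suppose there is an $(s,k')$-schedule $Q$ with $C_{\max}(Q)>\theta$ and at most $g$ gaps. Then there is an $(s,k')$-schedule $R$ that schedules all jobs $j\le k'$ with $r_s\le r_j<\theta$ and satisfies: (a) $C_{\max}(R)\le\theta$ and $R$ has at most $g$ gaps; (b) if $C_{\max}(R)<\theta$ then $R$ has strictly fewer than $g$ gaps.
   Context: Time is discrete (slots $[t,t+1)$). There are $n$ jobs, job $j$ with integer processing time $p_j\ge1$, release time $r_j$, deadline $d_j$; jobs are indexed so that $d_1<\dots<d_n$, release times are pairwise distinct, and the instance is feasible. A (partial, preemptive) schedule assigns to each slot at most one job so that each job it schedules receives exactly $p_j$ slots in $[r_j,d_j)$; schedules are taken with the earliest-deadline property (whenever busy at slot $t$, run the released, not yet completed scheduled job of smallest deadline). $C_j(S)$ is the completion time of $j$, $C_{\max}(S)=\max_jC_j(S)$. For $s\in\{1,\dots,n\}$, $k\in\{0,\dots,n\}$, an $(s,k)$-schedule is a schedule $S$ with $C_{\max}(S)\le d_k$ scheduling exactly the jobs $j\le k$ with $r_s\le r_j<C_{\max}(S)$; the empty schedule counts, with $C_{\max}=r_s$. Gaps of an $(s,k)$-schedule: maximal idle intervals between its blocks (maximal busy intervals), plus the idle interval from $r_s$ to its first block if nonempty. For $r_j\ge r_s$, $C^{\mathrm{edf}}_{s,j}$ is the minimum completion time of job $j$ over all $(s,j)$-schedules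 that schedule $j$. *)

(* Defs.v *)
From mathcomp Require Import all_boot.
Set Implicit Arguments. Unset Strict Implicit. Unset Printing Implicit Defensive.

(* A schedule assigns to each time slot [t,t+1) at most one job (jobs are 1..n). *)
Definition schedule := nat -> option nat.

Section Scheduling.
Variables (n : nat) (p r d : nat -> nat).

Definition is_job (j : nat) : bool := (0 < j <= n).

(* every busy slot of a valid schedule lies before this horizon *)
Definition horizon : nat := \max_(1 <= j < n.+1) d j.

Definition scheduled (S : schedule) (j : nat) : Prop := exists t, S t = Some j.

Definition nslots (S : schedule) (j a b : nat) : nat :=
  \sum_(a <= t < b) (S t == Some j).

Definition valid (S : schedule) : Prop :=
  (forall t j, S t = Some j -> is_job j /\ r j <= t < d j) /\
  (forall j, scheduled S j -> nslots S j (r j) (d j) = p j).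

Definition edf (S : schedule) : Prop :=
  forall t j i, S t = Some j -> scheduled S i -> r i <= t ->
    nslots S i 0 t < p i -> d j <= d i.

Definition is_schedule (S : schedule) : Prop := valid S /\ edf S.

Definition compl (S : schedule) (j : nat) : nat :=
  \max_(t < horizon | S t == Some j) t.+1.

Definition Cmax (S : schedule) : nat := \max_(t < horizon | S t != None) t.+1.

(* C_max in the (s,k)-schedule sense: the empty schedule has C_max = r_s *)
Definition Cmax_s (s : nat) (S : schedule) : nat :=
  if Cmax S == 0 then r s else Cmax S.

Definition sk_schedule (s k : nat) (S : schedule) : Prop :=
  is_schedule S /\ Cmax_s s S <= d k /\
  (forall j, scheduled S j <-> (is_job j /\ j <= k /\ r s <= r j < Cmax_s s S)).

(* number of gaps: each maximal idle interval in [r_s, C_max) is counted by its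
   first slot t (idle, and either t = r_s or slot t-1 busy) *)
Definition gaps (s : nat) (S : schedule) : nat :=
  \sum_(r s <= t < Cmax_s s S)
     ((S t == None) && ((t == r s) || (S t.-1 != None))).

(* C^edf_{s,j} <= theta : some (s,j)-schedule scheduling j completes j by theta
   (i.e. the minimum of C_j over such schedules is <= theta) *)
Definition Cedf_le (s j theta : nat) : Prop :=
  exists S, sk_schedule s j S /\ scheduled S j /\ compl S j <= theta.

Definition feasible : Prop :=
  exists S, is_schedule S /\ forall j, is_job j -> scheduled S j.

End Scheduling.

(* Main.v *)
Require Import Defs.
From mathcomp Require Import all_boot zify.
Set Implicit Arguments. Unset Strict Implicit. Unset Printing Implicit Defensive.

Lemma sum_le_lt a b (P : pred nat) (F G : nat -> nat) i0 :
  (forall i, a <= i < b -> P i -> F i <= G i) -> a <= i0 < b -> P i0 ->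
  F i0 < G i0 -> \sum_(a <= i < b | P i) F i < \sum_(a <= i < b | P i) G i.
Proof.
move=> HFG Hi0 HP Hlt.
have Hin : i0 \in index_iota a b by rewrite mem_index_iota.
rewrite !(big_mkcond P) (bigD1_seq i0) //= ?iota_uniq // [X in _ < X](bigD1_seq i0) //= ?iota_uniq //.
rewrite HP -addSn leq_add // [X in _ <= X]big_seq_cond [X in X <= _]big_seq_cond.
apply: leq_sum => i /andP[]; rewrite mem_index_iota => Hi _.
by case: ifP => // Pi; apply: HFG.
Qed.

Lemma sum_le a b (P : pred nat) (F G : nat -> nat) :
  (forall i, a <= i < b -> P i -> F i <= G i) ->
  \sum_(a <= i < b | P i) F i <= \sum_(a <= i < b | P i) G i.
Proof.
move=> HFG; rewrite big_seq_cond [X in _ <= X]big_seq_cond.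
apply: leq_sum => i /andP[]; rewrite mem_index_iota => Hi Pi; exact: HFG.
Qed.

Lemma sum_eq_each a b (P : pred nat) (F G : nat -> nat) :
  (forall i, a <= i < b -> P i -> F i <= G i) ->
  \sum_(a <= i < b | P i) G i <= \sum_(a <= i < b | P i) F i ->
  forall i, a <= i < b -> P i -> F i = G i.
Proof.
move=> HFG Hs i Hi Pi; apply/eqP; rewrite eqn_leq HFG //=; rewrite leqNgt; apply/negP=> Hlt.
have := sum_le_lt HFG Hi Pi Hlt; rewrite ltnNge Hs //.
Qed.



Lemma sum_eq a b (P : pred nat) (F G : nat -> nat) :
  (forall i, a <= i < b -> P i -> F i = G i) ->
  \sum_(a <= i < b | P i) F i = \sum_(a <= i < b | P i) G i.
Proof.
move=> H; apply/eqP; rewrite eqn_leq; apply/andP; split; apply: sum_le => i Hi Pi;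
  by rewrite H.
Qed.

Lemma sum_ge_term a b (P : pred nat) (F : nat -> nat) i0 :
  a <= i0 < b -> P i0 -> F i0 <= \sum_(a <= i < b | P i) F i.
Proof.
move=> Hi0 HP.
have Hin : i0 \in index_iota a b by rewrite mem_index_iota.
have Hu : uniq (index_iota a b) by apply: iota_uniq.
by rewrite big_mkcond (bigD1_seq i0 Hin Hu) /= HP leq_addr.
Qed.

Lemma ohead_filter_mem (T : eqType) (P : pred T) (s : seq T) j :
  ohead [seq i <- s | P i] = Some j -> j \in s /\ P j.
Proof.
elim: s => [//|y s IH] /=; case: ifP => [Py [<-]|_ /IH [H1 H2]].
  by rewrite mem_head.
by rewrite in_cons H1 orbT.
Qed.

Lemma ohead_filter_none (T : eqType) (P : pred T) (s : seq T) :
  ohead [seq i <- s | P i] = None -> forall i, i \in s -> ~~ P i.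
Proof.
elim: s => [//|y s IH] /=; case: ifP => [//|Py /IH H] i; rewrite in_cons.
by case/orP => [/eqP ->|/H]; rewrite ?Py.
Qed.

Lemma ohead_filter_min (P : pred nat) a b j i :
  ohead [seq k <- index_iota a b | P k] = Some j -> a <= i < b -> P i -> j <= i.
Proof.
rewrite /index_iota; move: (b - a) => m; elim: m a => [|m IH] a' //=.
case: ifP => [Pa [<-]|Pa /IH H] Hi Pi; first by case/andP: Hi.
case: (ltngtP a' i) => [Hlt|Hgt|Eq].
- by apply: H => //; rewrite Hlt /=; case/andP: Hi.
- by move: Hi; rewrite leqNgt Hgt.
- by move: Pa; rewrite Eq Pi.
Qed.

Lemma sum_split a m b (F : nat -> nat) : a <= m -> m <= b ->
  \sum_(a <= i < b) F i = \sum_(a <= i < m) F i + \sum_(m <= i < b) F i.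
Proof. by move=> H1 H2; rewrite (@big_cat_nat _ _ _ m). Qed.

Section Generic.
Variables (n : nat) (p r d : nat -> nat).
Implicit Types (S : schedule).

Lemma nslots_split S j a m b : a <= m <= b ->
  nslots S j a b = nslots S j a m + nslots S j m b.
Proof. by move=> /andP[H1 H2]; rewrite /nslots (@big_cat_nat _ _ _ m a b _ _ H1 H2). Qed.

Lemma nslots_recr S j a b : a <= b ->
  nslots S j a b.+1 = nslots S j a b + (S b == Some j).
Proof. by move=> H; rewrite /nslots big_nat_recr. Qed.

Lemma nslots_zero S j a b : (forall t, a <= t < b -> S t <> Some j) ->
  nslots S j a b = 0.
Proof.
move=> H; rewrite /nslots big_seq_cond big1 // => t /andP[]; rewrite mem_index_iota => Ht _.
by case: eqP => // /H.
Qed.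

Lemma horizon_ge j : is_job n j -> d j <= horizon n d.
Proof.
move=> /andP[H1 H2]; rewrite /horizon.
by apply: (@leq_bigmax_seq _ _ xpredT d j) => //; rewrite mem_index_iota H1 ltnS.
Qed.

Lemma valid_win S t j : valid n p r d S -> S t = Some j -> is_job n j /\ r j <= t < d j.
Proof. by move=> [H _] /H. Qed.

Lemma valid_zero_lo S j a b : valid n p r d S -> b <= r j -> nslots S j a b = 0.
Proof.
move=> HV Hb; apply: nslots_zero => t /andP[_ Ht] /(valid_win HV) [_ /andP[Hr _]]; lia.
Qed.

Lemma valid_zero_hi S j a b : valid n p r d S -> d j <= a -> nslots S j a b = 0.
Proof.
move=> HV Hb; apply: nslots_zero => t /andP[Ht _] /(valid_win HV) [_ /andP[_ Hd]]; lia.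
Qed.

Lemma valid_total S j a b : valid n p r d S -> scheduled S j -> a <= r j -> d j <= b ->
  nslots S j a b = p j.
Proof.
move=> HV Hs Ha Hb.
have Hrd : r j <= d j by case: Hs => t /(valid_win HV) [_]; lia.
have E1 := @nslots_split S j a (r j) b; rewrite E1 ?Ha ?(leq_trans Hrd Hb) //.
have E2 := @nslots_split S j (r j) (d j) b; rewrite E2 ?Hrd ?Hb //.
rewrite (@valid_zero_lo S j a (r j)) // (@valid_zero_hi S j (d j) b) // addn0.
by case: HV => _ ->.
Qed.

Lemma valid_unsched S j a b : ~ scheduled S j -> nslots S j a b = 0.
Proof. by move=> Hn; apply: nslots_zero => t _ Ht; apply: Hn; exists t. Qed.

Lemma slot_le1 S t a b (P : pred nat) :
  \sum_(a <= i < b | P i) (S t == Some i) <= 1.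
Proof.
case: (S t) => [j|]; last by rewrite big1 // => i _.
rewrite big_mkcond /=.
case Hj: (j \in index_iota a b).
  have Hu : uniq (index_iota a b) by apply: iota_uniq.
  rewrite (bigD1_seq j Hj Hu) /= big1 ?addn0; first by case: (P j); case: (Some j == Some j).
  by move=> i /negbTE Hi; rewrite (inj_eq (@Some_inj _)) eq_sym Hi; case: (P i).
rewrite big_seq_cond big1 // => i /andP[Hi _].
rewrite (inj_eq (@Some_inj _)); case: eqP => [Eji|]; last by case: (P i).
by move: Hj; rewrite Eji Hi.
Qed.

Lemma slots_total S a b c e (P : pred nat) :
  \sum_(c <= i < e | P i) nslots S i a b <= b - a.
Proof.
rewrite /nslots exchange_big_nat /=.
apply: leq_trans (_ : \sum_(a <= t < b) 1 <= _); first by apply: leq_sum => t _; apply: slot_le1.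
by rewrite sum_nat_const_nat muln1.
Qed.

Lemma Cmax_ge S t : valid n p r d S -> S t <> None -> t.+1 <= Cmax n d S.
Proof.
move=> HV; case Et: (S t) => [j|] // _.
have [Hj /andP[_ Htd]] := valid_win HV Et.
have Ht : t < horizon n d by apply: leq_trans Htd (horizon_ge Hj).
by apply: (@leq_bigmax_cond _ (fun t : 'I_(horizon n d) => S t != None) (fun t => t.+1) (Ordinal Ht)) => /=; rewrite Et.
Qed.

Lemma Cmax_le S m : (forall t, m <= t -> S t = None) -> Cmax n d S <= m.
Proof.
move=> H; apply/bigmax_leqP => t Ht; rewrite ltnNge; apply/negP => /H; move/eqP: Ht; done.
Qed.

Lemma Cmax_idle S t : valid n p r d S -> Cmax n d S <= t -> S t = None.
Proof.
move=> HV Ht; case Et: (S t) => [j|] //.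
have := Cmax_ge HV (t := t); rewrite Et => /(_ ltac:(by [])); lia.
Qed.

Lemma Cmax_busy S : 0 < Cmax n d S -> S (Cmax n d S).-1 <> None.
Proof.
rewrite /Cmax; case: (pickP (fun t : 'I_(horizon n d) => S t != None)) => [t0 Ht0|H0].
  rewrite (@bigmax_eq_arg _ t0 (fun t : 'I_(horizon n d) => S t != None) (fun t => (nat_of_ord t).+1) Ht0) /=.
  by case: (@arg_maxnP _ t0 (fun t : 'I_(horizon n d) => S t != None) (fun t => (nat_of_ord t).+1) Ht0) => i /eqP.
by rewrite big_pred0.
Qed.

Lemma compl_last S j : valid n p r d S -> scheduled S j ->
  exists u, S u = Some j /\ compl n d S j = u.+1 /\ (forall t, S t = Some j -> t <= u).
Proof.
move=> HV [t0 Ht0].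
have [Hj /andP[_ Htd]] := valid_win HV Ht0.
have Ht : t0 < horizon n d by apply: leq_trans Htd (horizon_ge Hj).
have P0 : (fun t : 'I_(horizon n d) => S t == Some j) (Ordinal Ht) by rewrite /= Ht0.
rewrite /compl (@bigmax_eq_arg _ _ (fun t : 'I_(horizon n d) => S t == Some j) (fun t => (nat_of_ord t).+1) P0).
case: (@arg_maxnP _ _ (fun t : 'I_(horizon n d) => S t == Some j) (fun t => (nat_of_ord t).+1) P0) => u /eqP Hu Hmax.
exists u; split => //; split => // t Et.
have [Hj' /andP[_ Htd']] := valid_win HV Et.
have Ht' : t < horizon n d by apply: leq_trans Htd' (horizon_ge Hj').
by have := Hmax (Ordinal Ht'); rewrite /= Et eqxx => /(_ isT).
Qed.

End Generic.

Section Generic2.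
Implicit Types (S : schedule).

Lemma nslots_mono_hi S j a b b' : b <= b' -> nslots S j a b <= nslots S j a b'.
Proof.
move=> H; case: (leqP a b) => Hab.
  by rewrite (@nslots_split S j a b b') ?Hab ?H // leq_addr.
by rewrite /nslots big_geq // ltnW.
Qed.

Lemma nslots_mono_lo S j a a' b : a <= a' -> nslots S j a' b <= nslots S j a b.
Proof.
move=> H; case: (leqP a' b) => Hab.
  by rewrite (@nslots_split S j a a' b) ?Hab ?H // leq_addl.
by rewrite /nslots [X in X <= _]big_geq // ltnW.
Qed.

Lemma pos_sched S j a b : 0 < nslots S j a b -> scheduled S j.
Proof.
move=> H; case: (boolP [exists t : 'I_b, S t == Some j]) => [/existsP [t /eqP Ht]|Hn].
  by exists t.
move: H; rewrite /nslots big_seq_cond big1 // => t /andP[]; rewrite mem_index_iota => /andP[_ Htb] _.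
case: eqP => // Et; move/existsP: Hn; case; by exists (Ordinal Htb); rewrite /= Et.
Qed.

Lemma win_eq S j (rj dj : nat) a b : (forall t, S t = Some j -> rj <= t < dj) ->
  a <= rj -> rj <= dj -> dj <= b -> nslots S j a b = nslots S j rj dj.
Proof.
move=> Hw Ha Hrd Hb.
rewrite (@nslots_split S j a rj b) ?Ha ?(leq_trans Hrd Hb) //.
rewrite (@nslots_split S j rj dj b) ?Hrd ?Hb //.
rewrite (@nslots_zero S j a rj) ?(@nslots_zero S j dj b) ?addn0 //.
  by move=> t /andP[Ht _] /Hw; lia.
by move=> t /andP[_ Ht] /Hw; lia.
Qed.

End Generic2.

Section Main.
Variables (n : nat) (p r d : nat -> nat).
Implicit Types (S : schedule).
Hypothesis Hp : forall j, is_job n j -> 0 < p j.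
Hypothesis Hd : forall i j, is_job n i -> is_job n j -> i < j -> d i < d j.
Variables (s k' theta : nat).
Hypothesis Hs : is_job n s.
Hypothesis Hk : is_job n k'.
Hypothesis Htheta : r s <= theta.
Hypothesis Hedf : forall j, is_job n j -> j <= k' -> r s <= r j < theta ->
            Cedf_le n p r d s j theta.
Variable Q : schedule.
Hypothesis HQ : sk_schedule n p r d s k' Q.
Hypothesis HQC : theta < Cmax_s n r d s Q.

Definition inJ j := [&& is_job n j, j <= k' & r s <= r j < theta].

Lemma inJ_job j : inJ j -> is_job n j.
Proof. by case/and3P. Qed.

Lemma Hd_le i j : is_job n i -> is_job n j -> i <= j -> d i <= d j.
Proof.
move=> Hi Hj; rewrite leq_eqVlt => /orP[/eqP -> //|/(Hd Hi Hj)]; exact: ltnW.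
Qed.

Lemma Cmax_s_eq S : 0 < Cmax n d S -> Cmax_s n r d s S = Cmax n d S.
Proof. by rewrite /Cmax_s; case: eqP => // ->. Qed.

Lemma bound_tail t : \sum_(1 <= i < n.+1 | inJ i && (t <= r i)) p i <= theta - t.
Proof.
suff H : forall m t, theta - t < m ->
    \sum_(1 <= i < n.+1 | inJ i && (t <= r i)) p i <= theta - t.
  by apply: (H (theta - t).+1).
elim=> [//|m IH] {}t Hm.
set P := fun i => inJ i && (t <= r i).
case: (boolP (has P (index_iota 1 n.+1))) => [Hhas|Hnh]; last first.
  rewrite big_seq_cond big1 // => i /andP[Hi Pi]; exfalso.
  by move/hasPn: Hnh => /(_ i Hi) /negP; apply.
have exP : exists i, P i by case/hasP: Hhas => i _ Pi; exists i.
have ubP : forall i, P i -> i <= n.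
  by move=> i /andP[/and3P[/andP[_ ->]]].
case: (ex_maxnP exP ubP) => j Pj Hmaxj.
move: (Pj) => /andP[HJj Htj].
move: (HJj) => /and3P[Hjj Hjk Hjr].
have [S [[[HV HE] [HC Hchar]] [Hsj Hcj]]] := Hedf Hjj Hjk Hjr.
have [u [Su [Hcu Hlast]]] := compl_last HV Hsj.
have [_ /andP[Hru Hud]] := valid_win HV Su.
have HuH : u < horizon n d by apply: leq_trans Hud (horizon_ge d Hjj).
have HCu : u.+1 <= Cmax n d S by apply: Cmax_ge HV _; rewrite Su.
have Hu1 : u.+1 <= theta by rewrite -Hcu.
rewrite (bigID (fun i => r i <= u)) /=.
have E1 : \sum_(1 <= i < n.+1 | P i && (r i <= u)) p i =
          \sum_(1 <= i < n.+1 | P i && (r i <= u)) nslots S i t u.+1.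
  apply: sum_eq => i Hi /andP[/andP[HJi Hti] Hiu].
  have Hij : i <= j by apply: Hmaxj; apply/andP.
  move: (HJi) => /and3P[Hji _ /andP[Hsi _]].
  have Hsch : scheduled S i.
    apply/Hchar; split => //; split => //.
    rewrite Hsi Cmax_s_eq ?(leq_trans _ HCu) //=.
  have Htot : nslots S i 0 (horizon n d) = p i.
    apply: (valid_total HV) => //. exact (horizon_ge d Hji).
  have Hsp : nslots S i 0 (horizon n d) = nslots S i 0 u.+1 + nslots S i u.+1 (horizon n d).
    by apply: nslots_split; rewrite /= HuH.
  rewrite Hsp in Htot.
  have H0t : nslots S i 0 t = 0 by apply: (valid_zero_lo 0 HV).
  have Hsp2 : nslots S i 0 u.+1 = nslots S i 0 t + nslots S i t u.+1.
    by apply: nslots_split; apply/andP; split => //; lia.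
  rewrite Hsp2 H0t add0n in Htot.
  have Hlow : p i <= nslots S i t u.+1.
    case: (ltngtP i j) => [Hlt|Hgt|Eij].
    - have := HE u j i Su Hsch (leq_trans Hiu (leqnn _)).
      have Hdd := Hd Hji Hjj Hlt.
      case: ltnP => [Hl /(_ isT)|Hge _]; first by lia.
      have : nslots S i 0 u.+1 = nslots S i 0 u + (S u == Some i) by apply: nslots_recr.
      by rewrite Hsp2 H0t add0n; lia.
    - by lia.
    - subst i.
      have Hz : nslots S j u.+1 (horizon n d) = 0.
        by apply: nslots_zero => t' /andP[Ht' _] /Hlast; lia.
      by lia.
  by lia.
rewrite E1.
have A := slots_total S t u.+1 1 n.+1 (fun i => P i && (r i <= u)).
have B : \sum_(1 <= i < n.+1 | P i && ~~ (r i <= u)) p i =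
         \sum_(1 <= i < n.+1 | inJ i && (u.+1 <= r i)) p i.
  apply: eq_bigl => i; rewrite /P -ltnNge.
  case: (inJ i) => //=; apply/idP/idP; [by case/andP | move=> H1; apply/andP; split => //; lia].
have C := IH u.+1 ltac:(lia).
rewrite B; lia.
Qed.

Lemma HVQ : valid n p r d Q. Proof. by case: HQ => [[]]. Qed.
Lemma HEQ : edf p r d Q. Proof. by case: HQ => [[]]. Qed.
Lemma HchQ j : scheduled Q j <-> is_job n j /\ j <= k' /\ r s <= r j < Cmax_s n r d s Q.
Proof. by case: HQ => _ [_]. Qed.
Lemma HCQ : Cmax_s n r d s Q <= d k'. Proof. by case: HQ => _ []. Qed.

Lemma theta_H : theta < horizon n d.
Proof. by apply: leq_trans HQC (leq_trans HCQ _); exact (horizon_ge d Hk). Qed.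

Lemma QJ t j : Q t = Some j -> t < theta -> inJ j.
Proof.
move=> Qt Ht.
have [_ /andP[Hr _]] := valid_win HVQ Qt.
have [Hj [Hjk /andP[Hsj _]]] : is_job n j /\ j <= k' /\ r s <= r j < Cmax_s n r d s Q.
  by apply/HchQ; exists t.
by rewrite /inJ Hj Hjk Hsj /=; lia.
Qed.

Lemma inJ_schedQ j : inJ j -> scheduled Q j.
Proof.
case/and3P => Hj Hjk /andP[Hsj Hjt]; apply/HchQ; split => //; split => //.
by rewrite Hsj /=; lia.
Qed.

Lemma Q_pending t i : Q t = Some i -> nslots Q i 0 t < p i.
Proof.
move=> Qt.
have [Hi /andP[_ Htd]] := valid_win HVQ Qt.
have Htot : nslots Q i 0 (horizon n d) = p i.
  apply: (valid_total HVQ) => //; [by exists t | exact (horizon_ge d Hi)].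
have H1 := @nslots_mono_hi Q i 0 t.+1 (horizon n d) (leq_trans Htd (horizon_ge d Hi)).
rewrite nslots_recr // Qt eqxx in H1; lia.
Qed.

Definition W := \sum_(1 <= i < n.+1 | inJ i) p i.
Definition cJ y := \sum_(1 <= i < n.+1 | inJ i) nslots Q i y (horizon n d).

Lemma cJ_split y : y <= horizon n d ->
  \sum_(1 <= i < n.+1 | inJ i) nslots Q i 0 y + cJ y = W.
Proof.
move=> Hy; rewrite /cJ -big_split /=; apply: sum_eq => i _ HJ.
rewrite -nslots_split ?Hy //; apply: (valid_total HVQ) => //; first exact: inJ_schedQ.
exact (horizon_ge d (inJ_job HJ)).
Qed.

Lemma cJ_rs : cJ (r s) = W.
Proof.
apply: sum_eq => i _ HJ; apply: (valid_total HVQ) => //; first exact: inJ_schedQ.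
  by case/and3P: HJ => _ _ /andP[].
exact (horizon_ge d (inJ_job HJ)).
Qed.

Lemma W_le : W <= theta - r s.
Proof.
have := bound_tail (r s); rewrite /W.
suff -> : \sum_(1 <= i < n.+1 | inJ i && (r s <= r i)) p i = \sum_(1 <= i < n.+1 | inJ i) p i by [].
by apply: eq_bigl => i; case H: (inJ i) => //=; case/and3P: H => _ _ /andP[].
Qed.

Lemma cJ_step y : cJ y.+1 <= cJ y.
Proof. by apply: leq_sum => i _; apply: nslots_mono_lo. Qed.

Lemma cJ_step2 y : y < horizon n d -> cJ y <= (cJ y.+1).+1.
Proof.
move=> Hy; rewrite /cJ.
have -> : \sum_(1 <= i < n.+1 | inJ i) nslots Q i y (horizon n d) =
   \sum_(1 <= i < n.+1 | inJ i) ((Q y == Some i) + nslots Q i y.+1 (horizon n d)).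
  apply: sum_eq => i _ _; rewrite (@nslots_split Q i y y.+1) ?Hy ?leqnSn //.
  by rewrite /nslots big_nat1.
rewrite big_split /=; have := slot_le1 Q y 1 n.+1 inJ; lia.
Qed.

Lemma exists_x : exists x, [/\ r s <= x, x <= theta & cJ x = theta - x].
Proof.
have exP : exists y, (r s <= y) && (theta <= cJ y + y).
  by exists theta; rewrite Htheta leq_addl.
case: (ex_minnP exP) => x /andP[Hx1 Hx2] Hmin.
have Hxt : x <= theta by apply: Hmin; rewrite Htheta leq_addl.
exists x; split => //.
case: (ltngtP x (r s)) => [|Hgt|Ex]; first by lia.
- have Hy : x.-1 < horizon n d by have := theta_H; lia.
  have := cJ_step2 Hy; rewrite prednK ?(leq_ltn_trans _ Hgt) // => Hs2.
  have : ~~ ((r s <= x.-1) && (theta <= cJ x.-1 + x.-1)).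
    by apply/negP => /Hmin; lia.
  have := cJ_step x.-1; rewrite prednK ?(leq_ltn_trans _ Hgt) // => Hs3.
  rewrite negb_and -ltnNge -ltnNge; case/orP => H; lia.
- subst x; have := W_le; rewrite -cJ_rs; lia.
Qed.

Section Construct.
Variable x : nat.
Hypothesis Hx1 : r s <= x.
Hypothesis Hx2 : x <= theta.
Hypothesis Hx3 : cJ x = theta - x.

Definition pend t (c : nat -> nat) i := [&& inJ i, r i <= t & c i < p i].
Definition pick t c := ohead [seq i <- index_iota 1 n.+1 | pend t c i].
Definition Rslot t c := if t < x then Q t else if t < theta then pick t c else None.
Fixpoint st t : nat -> nat :=
  match t with
  | 0 => fun _ => 0
  | t'.+1 => let c := st t' in fun i => c i + (Rslot t' c == Some i)
  end.
Definition R t := Rslot t (st t).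

Lemma st_ns t i : st t i = nslots R i 0 t.
Proof.
elim: t => [|t IH]; first by rewrite /nslots big_geq.
by rewrite nslots_recr //= -IH.
Qed.

Lemma R_prefix t : t < x -> R t = Q t.
Proof. by rewrite /R /Rslot => ->. Qed.

Lemma ns_prefix i t : t <= x -> nslots R i 0 t = nslots Q i 0 t.
Proof.
move=> Ht; apply: sum_eq => t' /andP[_ Ht'] _; rewrite R_prefix //; lia.
Qed.

Lemma R_late t : theta <= t -> R t = None.
Proof. by move=> Ht; rewrite /R /Rslot ltnNge (leq_trans Hx2 Ht) ltnNge Ht. Qed.

Lemma R_mid t : x <= t < theta -> R t = pick t (st t).
Proof. by case/andP => H1 H2; rewrite /R /Rslot ltnNge H1 H2. Qed.

Lemma R_some t j : R t = Some j ->
  [/\ inJ j, r j <= t, t < theta & nslots R j 0 t < p j].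
Proof.
move=> Rt.
case: (ltnP t x) => Htx.
  rewrite R_prefix // in Rt.
  have Htt : t < theta by lia.
  have [_ /andP[Hr _]] := valid_win HVQ Rt.
  split => //; first exact: QJ Rt Htt.
  rewrite ns_prefix; [exact: Q_pending Rt | exact: ltnW].
case: (ltnP t theta) => Htt; last by rewrite R_late in Rt.
rewrite R_mid ?Htx // in Rt.
have [_] := ohead_filter_mem Rt.
by case/and3P => HJ Hr Hc; split => //; rewrite -st_ns.
Qed.

Lemma st_le t i : nslots R i 0 t <= p i.
Proof.
elim: t => [|t IH]; first by rewrite /nslots big_geq.
rewrite nslots_recr //; case E: (R t == Some i) => /=; last by rewrite addn0.
by have [_ _ _ H] := R_some (eqP E); rewrite addn1.
Qed.

Lemma R_min t j i : x <= t < theta -> R t = Some j -> pend t (st t) i -> j <= i.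
Proof.
move=> Ht Rt Pi; rewrite R_mid // in Rt.
apply: (ohead_filter_min Rt) => //.
by case/and3P: Pi => /inJ_job /andP[H1 H2] _ _; rewrite H1 ltnS.
Qed.

Lemma R_none t i : x <= t < theta -> R t = None -> inJ i -> r i <= t -> p i <= nslots R i 0 t.
Proof.
move=> Ht Rt HJ Hri; rewrite R_mid // in Rt.
have Hin : i \in index_iota 1 n.+1.
  by move: (inJ_job HJ) => /andP[H1 H2]; rewrite mem_index_iota H1 ltnS.
have := ohead_filter_none Rt Hin; rewrite /pend HJ Hri /= -st_ns; lia.
Qed.

Definition tot t := \sum_(1 <= i < n.+1 | inJ i) nslots R i 0 t.

Lemma inc_zero (X : schedule) t (P : pred nat) : (forall i, X t = Some i -> ~~ P i) ->
  \sum_(1 <= i < n.+1 | P i) (X t == Some i) = 0.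
Proof.
move=> H; rewrite big1 // => i Pi; case: eqP => // /H; by rewrite Pi.
Qed.

Lemma inc_one (X : schedule) t (P : pred nat) i : X t = Some i -> P i -> is_job n i ->
  \sum_(1 <= i < n.+1 | P i) (X t == Some i) = 1.
Proof.
move=> Xt Pi /andP[H1 H2]; apply/eqP; rewrite eqn_leq slot_le1 /=.
have := @sum_ge_term 1 n.+1 P (fun i => X t == Some i) i; rewrite Xt eqxx H1 ltnS H2 /=.
by move=> /(_ isT Pi).
Qed.

Lemma tot_step t : tot t.+1 = tot t + (R t != None).
Proof.
rewrite /tot (eq_bigr (fun i => nslots R i 0 t + (R t == Some i))); last first.
  by move=> i _; rewrite nslots_recr.
rewrite big_split /=; congr (_ + _).
case E: (R t) => [j|].
  have [HJ _ _ _] := R_some E.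
  by rewrite -E (inc_one E HJ (inJ_job HJ)) E.
by rewrite -E (inc_zero (P := inJ) (X := R) (t := t)) ?E // => i; rewrite E.
Qed.

Lemma W_ge : theta - x <= W.
Proof. have := cJ_split (ltnW (leq_ltn_trans Hx2 theta_H)); lia. Qed.

Lemma tot_x : tot x = W - (theta - x).
Proof.
have := cJ_split (ltnW (leq_ltn_trans Hx2 theta_H)).
have -> : \sum_(1 <= i < n.+1 | inJ i) nslots Q i 0 x = tot x.
  by apply: sum_eq => i _ _; rewrite ns_prefix.
lia.
Qed.

Lemma no_starve k : x + k <= theta ->
  tot (x + k) = W - (theta - (x + k)) /\ (forall t, x <= t < x + k -> R t <> None).
Proof.
elim: k => [|k IH] Hkk; first by rewrite addn0 tot_x; split => // t; lia.
have [IH1 IH2] := IH ltac:(lia).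
set t := x + k in IH1 IH2 *.
have Htt : t < theta by rewrite /t -addnS.
have Hxt : x <= t by rewrite /t leq_addr.
have Rt : R t <> None.
  move=> Rt.
  have HA : \sum_(1 <= i < n.+1 | inJ i && (r i <= t)) p i <= tot t.
    rewrite /tot [X in _ <= X](bigID (fun i => r i <= t)) /=.
    apply: (leq_trans _ (leq_addr _ _)); apply: sum_le => i _ /andP[HJ Hr].
    by apply: R_none => //; rewrite /t leq_addr.
  have HB := bound_tail t.+1.
  have HW : W = \sum_(1 <= i < n.+1 | inJ i && (r i <= t)) p i +
                \sum_(1 <= i < n.+1 | inJ i && (t.+1 <= r i)) p i.
    rewrite /W (bigID (fun i => r i <= t)) /=; congr (_ + _).
    by apply: eq_bigl => i; rewrite ltnNge.
  have := W_ge; lia.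
split.
  rewrite addnS -/t tot_step IH1; have := W_ge; case: (R t) Rt => //= _ _; lia.
move=> t' /andP[H1 H2]; rewrite addnS ltnS leq_eqVlt in H2.
by case/orP: H2 => [/eqP ->|H2] //; apply: IH2; rewrite H1.
Qed.

Lemma busy_mid t : x <= t < theta -> R t <> None.
Proof.
move=> /andP[H1 H2]; have [_ H] := @no_starve (theta - x) ltac:(lia).
apply: H; lia.
Qed.

Lemma complete i : inJ i -> nslots R i 0 theta = p i.
Proof.
move=> HJ.
have [H _] := @no_starve (theta - x) ltac:(lia).
rewrite subnKC // subnn subn0 in H.
apply: (@sum_eq_each 1 n.+1 inJ (fun i => nslots R i 0 theta) p) => //.
- by move=> i' _ _; apply: st_le.
- by rewrite -/(tot theta) H.
- by move: (inJ_job HJ) => /andP[H1 H2]; rewrite H1 ltnS.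
Qed.

Lemma after_theta i t : theta <= t -> nslots R i 0 t = nslots R i 0 theta.
Proof.
move=> Ht; rewrite (@nslots_split R i 0 theta t) ?Ht // (@nslots_zero R i theta t) ?addn0 //.
by move=> t' /andP[H _]; rewrite R_late.
Qed.

Lemma R_sched i : inJ i -> scheduled R i.
Proof.
move=> HJ; apply: (@pos_sched R i 0 theta); rewrite complete //; exact: Hp (inJ_job HJ).
Qed.

Lemma R_sched_inJ i : scheduled R i -> inJ i.
Proof. by case=> t /R_some []. Qed.

Lemma Q_le i t : inJ i -> nslots Q i 0 t <= p i.
Proof.
move=> HJ; apply: leq_trans (@nslots_mono_hi Q i 0 t (maxn t (horizon n d)) (leq_maxl _ _)) _.
rewrite (valid_total HVQ) //; first exact: inJ_schedQ.
apply: leq_trans (leq_maxr _ _); exact (horizon_ge d (inJ_job HJ)).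
Qed.

Definition A (X : schedule) j t := \sum_(1 <= i < n.+1 | inJ i && (i <= j)) nslots X i 0 t.

Lemma A_step (X : schedule) j t :
  A X j t.+1 = A X j t + \sum_(1 <= i < n.+1 | inJ i && (i <= j)) (X t == Some i).
Proof.
rewrite /A -big_split /=; apply: sum_eq => i _ _; exact: nslots_recr.
Qed.

Lemma dom j t : A Q j t <= A R j t.
Proof.
elim: t => [|t IH].
  by rewrite /A !big1 // => i _; rewrite /nslots big_geq.
rewrite !A_step.
have HQ1 := slot_le1 Q t 1 n.+1 (fun i => inJ i && (i <= j)).
case: (ltnP t x) => Htx.
  rewrite R_prefix //; lia.
case: (ltnP (A Q j t) (A R j t)) => Hlt; first lia.
case EQ: (Q t) => [i|]; rewrite -EQ; last first.
  rewrite (@inc_zero Q t); last by move=> i; rewrite EQ.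
  lia.
case Hij: (inJ i && (i <= j)); last first.
  rewrite (@inc_zero Q t); last by move=> i'; rewrite EQ => -[<-]; rewrite Hij.
  lia.
rewrite (inc_one EQ Hij); last by case/andP: Hij => /inJ_job.
move: (Hij) => /andP[HJi Hij'].
have [_ /andP[Hri _]] := valid_win HVQ EQ.
have Hqi := Q_pending EQ.
case: (ltnP t theta) => Htt.
  case: (boolP (has (fun i' => pend t (st t) i' && (i' <= j)) (index_iota 1 n.+1))) => Hh.
    case/hasP: Hh => i' Hin /andP[Hpi' Hi'j].
    case ER: (R t) => [j0|].
      have [HJ0 _ _ _] := R_some ER.
      have Hj0 : j0 <= i' := R_min (t := t) ltac:(lia) ER Hpi'.
      have Hj0j : inJ j0 && (j0 <= j) by rewrite HJ0 (leq_trans Hj0 Hi'j).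
      rewrite -ER (inc_one ER Hj0j (inJ_job HJ0)); lia.
    exfalso; rewrite R_mid in ER; last by rewrite Htx Htt.
    by have := ohead_filter_none ER Hin; rewrite Hpi'.
  exfalso; move: Hlt; apply/negP; rewrite -ltnNge.
  apply: (@sum_le_lt 1 n.+1 _ _ _ i).
  - move=> i' Hi' /andP[HJ' Hi'j].
    case: (leqP (r i') t) => Hr'.
      have := hasPn Hh i'; rewrite mem_index_iota Hi' => /(_ isT).
      rewrite /pend HJ' Hr' Hi'j -st_ns /= andbT -leqNgt => Hge.
      by apply: leq_trans (Q_le _ HJ') Hge.
    by rewrite (@valid_zero_lo n p r d Q i' 0 t HVQ (ltnW Hr')).
  - by move: (inJ_job HJi) => /andP[H1 H2]; rewrite H1 ltnS.
  - by [].
  - have := hasPn Hh i; rewrite mem_index_iota => /(_ ltac:(move: (inJ_job HJi) => /andP[H1 H2]; rewrite H1 ltnS H2 //)).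
    rewrite /pend HJi Hri Hij' -st_ns /= andbT -leqNgt => Hge.
    by apply: leq_trans Hqi Hge.
exfalso; move: Hlt; apply/negP; rewrite -ltnNge.
have -> : A R j t = \sum_(1 <= i < n.+1 | inJ i && (i <= j)) p i.
  apply: sum_eq => i' _ /andP[HJ' _]; rewrite after_theta //; exact: complete.
apply: (@sum_le_lt 1 n.+1 _ _ _ i) => //.
- by move=> i' _ /andP[HJ' _]; apply: Q_le.
- by move: (inJ_job HJi) => /andP[H1 H2]; rewrite H1 ltnS.
Qed.

Lemma R_deadline t j : R t = Some j -> t < d j.
Proof.
move=> Rt; have [HJ Hrt Htt Hns] := R_some Rt.
rewrite ltnNge; apply/negP => Hdt.
have HD := dom j (d j).
have EQ : A Q j (d j) = \sum_(1 <= i < n.+1 | inJ i && (i <= j)) p i.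
  apply: sum_eq => i _ /andP[HJi Hij]; apply: (valid_total HVQ) => //.
  - exact: inJ_schedQ.
  - exact: Hd_le (inJ_job HJi) (inJ_job HJ) Hij.
have LT : A R j (d j) < \sum_(1 <= i < n.+1 | inJ i && (i <= j)) p i.
  apply: (@sum_le_lt 1 n.+1 _ _ _ j).
  - by move=> i _ _; apply: st_le.
  - by move: (inJ_job HJ) => /andP[H1 H2]; rewrite H1 ltnS.
  - by rewrite HJ leqnn.
  - exact: leq_ltn_trans (nslots_mono_hi _ _ _ Hdt) Hns.
lia.
Qed.

Lemma valid_R : valid n p r d R.
Proof.
split.
  move=> t j Rt; have [HJ Hrt _ _] := R_some Rt; split; first exact: inJ_job.
  by rewrite Hrt (R_deadline Rt).
move=> j /R_sched_inJ HJ.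
have Hw : forall t, R t = Some j -> r j <= t < d j.
  by move=> t Rt; have [_ Hrt _ _] := R_some Rt; rewrite Hrt (R_deadline Rt).
have Hrd : r j <= d j by case: (R_sched HJ) => t /Hw; lia.
have Hdh : d j <= horizon n d by exact (horizon_ge d (inJ_job HJ)).
rewrite -(@win_eq R j (r j) (d j) 0 (horizon n d)) //.
rewrite after_theta ?complete //; exact: ltnW theta_H.
Qed.

Lemma edf_R : edf p r d R.
Proof.
move=> t j i Rt Hsi Hri Hns.
have HJi := R_sched_inJ Hsi.
case: (ltnP t x) => Htx.
  rewrite R_prefix // in Rt; rewrite ns_prefix in Hns; last exact: ltnW.
  exact: HEQ Rt (inJ_schedQ HJi) Hri Hns.
case: (ltnP t theta) => Htt; last by rewrite R_late in Rt.
have Hpend : pend t (st t) i by rewrite /pend HJi Hri st_ns Hns.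
have Hji : j <= i := R_min (t := t) ltac:(lia) Rt Hpend.
have [HJj _ _ _] := R_some Rt.
exact: Hd_le (inJ_job HJj) (inJ_job HJi) Hji.
Qed.

Lemma CmaxR_le : Cmax n d R <= theta.
Proof. by apply: Cmax_le => t; apply: R_late. Qed.

Lemma Cmax_le_s : Cmax n d R <= Cmax_s n r d s R.
Proof. by rewrite /Cmax_s; case: eqP => [->|]. Qed.

Lemma CmaxsR_le : Cmax_s n r d s R <= theta.
Proof. by rewrite /Cmax_s; case: eqP => _ //; exact: CmaxR_le. Qed.

Lemma CmaxsR_ge : r s <= Cmax_s n r d s R.
Proof.
rewrite /Cmax_s; case: eqP => // /eqP Hc.
have := @Cmax_busy n d R ltac:(lia).
case E: (R _) => [j|] // _.
have [HJ Hrt _ _] := R_some E.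
case/and3P: HJ => _ _ /andP[Hsj _]; lia.
Qed.

Lemma CmaxR_eq : x < theta -> Cmax_s n r d s R = theta.
Proof.
move=> Hxt.
have Hb : R theta.-1 <> None by apply: busy_mid; lia.
have := Cmax_ge valid_R Hb; have := CmaxR_le.
rewrite /Cmax_s; case: eqP => [->|_]; lia.
Qed.

Lemma sk_R : sk_schedule n p r d s k' R.
Proof.
split; first by split; [exact: valid_R | exact: edf_R].
split; first by have := CmaxsR_le; have := HCQ; lia.
move=> j; split.
  move=> Hsj; have HJ := R_sched_inJ Hsj; case: Hsj => t Rt.
  have [_ Hrt _ _] := R_some Rt.
  have HC := Cmax_ge valid_R (t := t) ltac:(by rewrite Rt).
  case/and3P: HJ => Hj Hjk /andP[Hsj' _]; split => //; split => //.
  rewrite Hsj' /= Cmax_s_eq; lia.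
move=> [Hj [Hjk /andP[Hsj Hjc]]]; apply: R_sched.
rewrite /inJ Hj Hjk Hsj /=; have := CmaxsR_le; lia.
Qed.

Definition gterm (X : schedule) t := (X t == None) && ((t == r s) || (X t.-1 != None)).

Lemma gaps_eq (X : schedule) : gaps n r d s X = \sum_(r s <= t < Cmax_s n r d s X) gterm X t.
Proof. by []. Qed.

Lemma gterm_prefix t : t < x -> gterm R t = gterm Q t.
Proof.
move=> Ht; rewrite /gterm !R_prefix //; exact: leq_ltn_trans (leq_pred t) Ht.
Qed.

Lemma gaps_R : gaps n r d s R <= gaps n r d s Q /\
  (Cmax_s n r d s R < theta -> gaps n r d s R < gaps n r d s Q).
Proof.
rewrite !gaps_eq.
have HCQ' := HQC.
case: (ltnP x theta) => Hxt.
  rewrite CmaxR_eq // ltnn; split => //.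
  have Z : \sum_(x <= t < theta) gterm R t = 0.
    rewrite big_nat_cond big1 // => t /andP[/andP[H1 H2] _]; rewrite /gterm.
    by case: eqP => // /busy_mid; rewrite H1 H2 => /(_ isT).
  rewrite (@sum_split (r s) x theta) // Z addn0.
  rewrite (@sum_split (r s) x (Cmax_s n r d s Q)) //; last by lia.
  apply: (leq_trans _ (leq_addr _ _)); rewrite leq_eqVlt; apply/orP; left; apply/eqP.
  by apply: sum_eq => t /andP[_ Ht] _; rewrite gterm_prefix.
have Exq : x = theta by lia.
set C := Cmax_s n r d s R.
have HC1 := CmaxsR_ge; have HC2 := CmaxsR_le.
have E1 : \sum_(r s <= t < C) gterm R t = \sum_(r s <= t < C) gterm Q t.
  by apply: sum_eq => t /andP[_ Ht] _; rewrite gterm_prefix //; lia.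
rewrite E1 (@sum_split (r s) C (Cmax_s n r d s Q)) //; last by lia.
split; first exact: leq_addr.
move=> HCt; rewrite -addn1 leq_add2l.
have HgC : gterm Q C.
  rewrite -gterm_prefix; last by lia.
  rewrite /gterm (Cmax_idle valid_R Cmax_le_s) eqxx /=.
  rewrite /C /Cmax_s; case: (boolP (Cmax n d R == 0)) => Hc /=; first by rewrite eqxx.
  apply/orP; right; apply/eqP; apply: Cmax_busy; rewrite lt0n.
  exact: Hc.
rewrite big_ltn; last by lia.
by rewrite HgC.
Qed.

Lemma final_x g : gaps n r d s Q <= g ->
  exists R : schedule,
    sk_schedule n p r d s k' R /\
    (forall j, is_job n j -> j <= k' -> r s <= r j < theta -> scheduled R j) /\
    (Cmax_s n r d s R <= theta /\ gaps n r d s R <= g) /\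
    (Cmax_s n r d s R < theta -> gaps n r d s R < g).
Proof.
move=> Hg; exists R; split; first exact: sk_R.
have [G1 G2] := gaps_R.
split.
  move=> j Hj Hjk Hjr; apply: R_sched; by rewrite /inJ Hj Hjk Hjr.
split; first by split; [exact: CmaxsR_le | lia].
move=> /G2; lia.
Qed.

End Construct.

Lemma main_res g : gaps n r d s Q <= g ->
  exists R : schedule,
    sk_schedule n p r d s k' R /\
    (forall j, is_job n j -> j <= k' -> r s <= r j < theta -> scheduled R j) /\
    (Cmax_s n r d s R <= theta /\ gaps n r d s R <= g) /\
    (Cmax_s n r d s R < theta -> gaps n r d s R < g).
Proof.
have [x [H1 H2 H3]] := exists_x.
exact: (final_x H1 H2 H3).
Qed.


End Main.

Theorem lemma8 (n : nat) (p r d : nat -> nat)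
  (Hp : forall j, is_job n j -> 0 < p j)
  (Hd : forall i j, is_job n i -> is_job n j -> i < j -> d i < d j)
  (Hr : forall i j, is_job n i -> is_job n j -> r i = r j -> i = j)
  (Hfeas : feasible n p r d)
  (s k' theta g : nat)
  (Hs : is_job n s) (Hk : is_job n k') (Htheta : r s <= theta)
  (Hedf : forall j, is_job n j -> j <= k' -> r s <= r j < theta ->
            Cedf_le n p r d s j theta)
  (Q : schedule)
  (HQ : sk_schedule n p r d s k' Q)
  (HQC : theta < Cmax_s n r d s Q)
  (HQg : gaps n r d s Q <= g) :
  exists R : schedule,
    sk_schedule n p r d s k' R /\
    (forall j, is_job n j -> j <= k' -> r s <= r j < theta -> scheduled R j) /\
    (Cmax_s n r d s R <= theta /\ gaps n r d s R <= g) /\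
    (Cmax_s n r d s R < theta -> gaps n r d s R < g).
Proof.

exact: (main_res Hp Hd Hs Hk Htheta Hedf HQ HQC HQg).
Qed.
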